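(* Under Algorithm 2(a) below (with field size $q>n$), in every slot $t$, the size $Q(t)$ of the sender's queue after the arrivals of slot $t$ have been appended (end of Step 3) satisfies $$Q(t)\le \sum_{j=1}^n\big(\dim V(t)-\dim V_j(t)\big),$$ where $V(t)=\mathbb{F}_q^{A(t)}$ is the sender's knowledge space, $A(t)$ is the total number of arrivals up to and including slot $t$, and $V_j(t)$ is receiver $j$'s knowledge space at that time. That is, the physical queue size is at most the sum over receivers of the backlog in degrees of freedom between the sender and that receiver.
   Context: Model: a sender broadcasts to $n$ receivers over a slotted packet erasure broadcast channel; packets are vectors over $\mathbb{F}_q$, indexed by arrival order; each slot some packets may arrive at the sender (just after the slot begins); the sender transmits at most one linear combination of its stored packets per slot; each receiver either receives it or suffers an erasure, and the sender learns via perfect feedback before the end of the slot which receivers received it. The knowledge space of a node is the space of global coefficient vectors (with respect to all original packets arrived so far) of linear combinations it can compute. Algorithm 2(a): The sender stores queue contents $\mathbf{y}_1,\dots,\mathbf{y}_Q$ (each a linear combination of original packets) and matrices $B,B_1,\dots,B_n$ with $Q$ columns whose rows are local coefficient vectors (with respect to the current queue contents); initially all are empty. In every slot: (Step 3) if $a$ packets arrive, append them at the end of the queue, set $B=I_{Q}$ for the new queue length $Q$, and append $a$ zero columns to each $B_j$. (Step 4) If the queue is nonempty, choose $\mathbf{g}\in\mathrm{span}(B)$ with $\mathbf{g}\notin\mathrm{span}(B_j)$ for every $j$ with $\mathrm{span}(B_j)\ne\mathrm{span}(B)$ (span means row space), and transmit $\sum_i g_i\mathbf{y}_i$; otherwise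 set $\mathbf{g}=\mathbf{0}$ and transmit nothing. (Step 5) For each $j$, if $\mathbf{g}\neq\mathbf{0}$ and receiver $j$ received the transmission, append $\mathbf{g}$ as a row of $B_j$. (Step 6) Let $B_\Delta$ be a basis of $\bigcap_j\mathrm{span}(B_j)$; let $B'$ be a completion of $B_\Delta$ to a basis of $\mathrm{span}(B)$ and $B''=B'\setminus B_\Delta$; for each $j$ let $B_j'$ be a completion of $B_\Delta$ to a basis of $\mathrm{span}(B_j)$ such that $B_j'':=B_j'\setminus B_\Delta\subseteq\mathrm{span}(B'')$. (Step 7) Replace the queue contents by the packets $\sum_i h_i\mathbf{y}_i$ for $\mathbf{h}\in B''$. (Step 8) Replace each $B_j$ by the matrix $X_j$ with $B_j''=X_jB''$, and set $B=I_{|B''|}$. *)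

(* Defs.v *)
(* Model of Algorithm 2(a) (relational: all nondeterministic
   choices of the algorithm are existentially chosen at each slot). *)
From HB Require Import structures.
From mathcomp Require Import all_boot all_order all_algebra.
Set Implicit Arguments. Unset Strict Implicit. Unset Printing Implicit Defensive.
Import GRing.Theory.
Local Open Scope ring_scope.

Section Alg.
Variables (F : finFieldType) (n N : nat).
(* N = dimension of the ambient space of global coefficient vectors
   (original packets 0 .. N-1, indexed by arrival order). *)

(* The matrix B of the
   algorithm is always I_Q outside Step 6 (set so in Steps 3 and 8, and
   initially empty = I_0), so span(B) is the full space F^Q. *)
Record state := St {
  qsz : nat;
  Ymx : 'M[F]_(qsz, N);                       (* row i = global coeff. vector of y_i *)
  kB  : 'I_n -> nat;
  Bmx : forall j : 'I_n, 'M[F]_(kB j, qsz);  (* B_j (rows = local coeff. vectors) *)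
  Vmx : 'I_n -> 'M[F]_N                      (* knowledge space V_j (row space) *)
}.

Definition init_state : state :=
  @St 0 0 (fun _ => 0%N) (fun _ => 0) (fun _ => 0).

(* the b x m matrix all of whose b rows are v (b = 0 or 1 in use) *)
Definition rows_of (b : nat) m (v : 'rV[F]_m) : 'M[F]_(b, m) :=
  \matrix_(i < b, k < m) v 0 k.

(* global coefficient vectors of the [a] packets arriving when [A0] packets
   arrived before: unit vectors e_{A0}, ..., e_{A0+a-1} *)
Definition new_packets (A0 a : nat) : 'M[F]_(a, N) :=
  \matrix_(i < a, k < N) ((k : nat) == A0 + i)%:R.

(* Step 3: append a arrivals (A0 = number of earlier arrivals). *)
Definition arrive (A0 a : nat) (s : state) : state :=
  @St (qsz s + a) (col_mx (Ymx s) (new_packets A0 a)) (@kB s)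
      (fun j => row_mx (Bmx s j) 0) (@Vmx s).

(* Steps 4-8, given the post-arrival state s, the reception pattern r
   (r j = receiver j receives the transmission), leading to state s'. *)
Definition steps48 (s : state) (r : 'I_n -> bool) (s' : state) : Prop :=
  exists g : 'rV[F]_(qsz s),
    (* Step 4 (g in span(B) = F^Q is automatic) *)
    (forall j, ~~ (Bmx s j == 1%:M)%MS -> ~~ (g <= Bmx s j)%MS) /\
    let b j := (g != 0) && r j in
    let C j := col_mx (Bmx s j) (rows_of (b j) g) in
    let W j := (Vmx s j + rows_of (b j) (g *m Ymx s))%MS in
    exists (d : nat) (BD : 'M[F]_(d, qsz s)) (k : nat) (B2 : 'M[F]_(k, qsz s))
           (m : 'I_n -> nat) (Bj2 : forall j, 'M[F]_(m j, qsz s))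
           (X : forall j, 'M[F]_(m j, k)),
      row_free BD /\ (BD == \bigcap_(j < n) <<C j>>)%MS /\
      row_free (col_mx BD B2) /\ row_full (col_mx BD B2) /\
      (forall j, row_free (col_mx BD (Bj2 j)) /\ (col_mx BD (Bj2 j) == C j)%MS /\
                 (Bj2 j <= B2)%MS /\
                 Bj2 j = X j *m B2) /\
      s' = @St k (B2 *m Ymx s) m X W.

End Alg.

(* Main.v *)
Require Import Defs.
From HB Require Import structures.
From mathcomp Require Import all_boot all_order all_algebra zify.
Import GRing.Theory.

Set Implicit Arguments. Unset Strict Implicit. Unset Printing Implicit Defensive.
Section Helpers.
Local Open Scope ring_scope.

Variables (F : finFieldType) (n N : nat).

Definition Zc (P : nat) m (M : 'M[F]_(m, N)) :=
  forall v : 'rV[F]_N, (v <= M)%MS -> forall k : 'I_N, (P <= k)%N -> v 0 k = 0.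

Lemma Zc_sub P m1 m2 (A : 'M[F]_(m1, N)) (B : 'M[F]_(m2, N)) :
  (A <= B)%MS -> Zc P B -> Zc P A.
Proof. by move=> sAB zB v sv; apply: zB; apply: submx_trans sAB. Qed.

Lemma Zc_add P m1 m2 (A : 'M[F]_(m1, N)) (B : 'M[F]_(m2, N)) :
  Zc P A -> Zc P B -> Zc P (A + B)%MS.
Proof.
move=> zA zB v /sub_addsmxP [u ->] k Pk.
by rewrite mxE (zA _ (submxMl _ _) _ Pk) (zB _ (submxMl _ _) _ Pk) addr0.
Qed.

Lemma Zc_mono P P' m (A : 'M[F]_(m, N)) : (P <= P')%N -> Zc P A -> Zc P' A.
Proof. by move=> le zA v sv k Pk; apply: zA sv k (leq_trans le Pk). Qed.

Lemma Zc_new P a : Zc (P + a) (new_packets F N P a).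
Proof.
move=> v /submxP [D ->] k Pk; rewrite mxE big1 // => i _.
rewrite mxE; case: eqP => [e|_]; last by rewrite mulr0.
by move: Pk; rewrite e leq_add2l leqNgt ltn_ord.
Qed.

Lemma Zc_0 P m : Zc P (0 : 'M[F]_(m, N)).
Proof. by move=> v /submx0null -> k _; rewrite mxE. Qed.

Lemma rows_ofM (b : nat) m p (g : 'rV[F]_m) (Y : 'M[F]_(m, p)) :
  rows_of b (g *m Y) = rows_of b g *m Y.
Proof.
apply/matrixP => i k; rewrite !mxE; apply: eq_bigr => l _; by rewrite mxE.
Qed.

Lemma cancel_col m1 m2 p (A : 'M[F]_(m1, p)) (B : 'M[F]_(m2, p)) y x :
  row_free (col_mx A B) -> y *m A + x *m B = 0 -> x = 0 :> 'rV_m2.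
Proof.
move=> rf e; have: row_mx y x *m col_mx A B = 0 *m col_mx A B.
  by rewrite mul_row_col e mul0mx.
move=> e1; have e0 := row_free_inj rf e1.
by have := congr1 rsubmx e0; rewrite row_mxKr => ->; apply/matrixP=> i j; rewrite !mxE.
Qed.

Lemma sub_col_r m1 m2 p (A : 'M[F]_(m1, p)) (B : 'M[F]_(m2, p)) :
  (B <= col_mx A B)%MS.
Proof. by rewrite -addsmxE addsmxSr. Qed.

Lemma sub_col_l m1 m2 p (A : 'M[F]_(m1, p)) (B : 'M[F]_(m2, p)) :
  (A <= col_mx A B)%MS.
Proof. by rewrite -addsmxE addsmxSl. Qed.


Definition Inv P (s : state F n N) :=
 [/\ Zc P (Ymx s), (forall j, Zc P (Vmx s j)),
     (forall j (x : 'rV_(qsz s)), (x *m Ymx s <= Vmx s j)%MS -> (x <= Bmx s j)%MS),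
     (forall j, (Bmx s j *m Ymx s <= Vmx s j)%MS) &
     (forall x : 'rV_(qsz s), (forall j, (x <= Bmx s j)%MS) -> x = 0)].

Lemma Inv_init : Inv 0 (init_state F n N).
Proof.
split => //=.
- exact: Zc_0.
- move=> j; exact: Zc_0.
- by move=> j x _; rewrite thinmx0 sub0mx.
- by move=> j; rewrite mulmx0 sub0mx.
- by move=> x _; rewrite thinmx0.
Qed.

Lemma Inv_arrive P a s : (0 < n)%N -> (P + a <= N)%N -> Inv P s -> Inv (P + a) (arrive P a s).
Proof.
move=> hn hPa [zY zV hc hd he]; split => /=.
- apply: (@Zc_sub _ _ _ _ (Ymx s + new_packets F N P a)%MS); first by rewrite addsmxE.
  apply: Zc_add; last exact: Zc_new.
  exact: Zc_mono (leq_addr _ _) zY.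
- move=> j; exact: Zc_mono (leq_addr _ _) (zV j).
- move=> j x; rewrite -(hsubmxK x) mul_row_col => hx.
  set x1 := lsubmx x in hx *; set x2 := rsubmx x in hx *.
  have x20 : x2 = 0.
    apply/rowP => i; rewrite mxE.
    have lt : (P + i < N)%N by apply: leq_trans hPa; rewrite ltn_add2l ltn_ord.
    have := zV j _ hx (Ordinal lt) (leq_addr _ _).
    rewrite mxE (zY _ (submxMl x1 _) (Ordinal lt) (leq_addr _ _)) add0r.
    rewrite mxE (bigD1 i) //= big1 ?addr0 => [|l nli].
      by rewrite !mxE /= eqxx mulr1.
    rewrite !mxE /=; case: (P + i == P + l)%N/eqP => [e|]; last by rewrite mulr0.
    have li : l = i by apply/val_inj/eqP; rewrite -(eqn_add2l P) e.
    by rewrite li eqxx in nli.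
  move: hx; rewrite x20 mul0mx addr0 => /hc /submxP [D ->].
  by rewrite -[0](mulmx0 _ D) -mul_mx_row submxMl.
- by move=> j; rewrite mul_row_col mul0mx addr0 hd.
- move=> x hx; rewrite -(hsubmxK x).
  have hj j : lsubmx x = lsubmx x /\ (lsubmx x <= Bmx s j)%MS /\ rsubmx x = 0.
    case/submxP: (hx j) => D e.
    move: e; rewrite mul_mx_row mulmx0 -{1}(hsubmxK x) => /eq_row_mx [-> ->].
    by rewrite submxMl.
  have := he (lsubmx x) (fun j => (hj j).2.1) => ->.
  have [_ [_ ->]] := hj (Ordinal hn) .
  by rewrite row_mx0.
Qed.


Lemma Inv_steps P s r s' : Inv P s -> steps48 s r s' -> Inv P s'.
Proof.
move=> [zY zV hc hd he] [g [_ H]]; move: H => /=.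
move=> [d [BD [k [B2 [m [Bj2 [X [rfD [eD [rfc [_ [hj ->]]]]]]]]]]]].
split => /=.
- exact: Zc_sub (submxMl _ _) zY.
- move=> j; apply: Zc_add (zV j) _.
  by apply: Zc_sub zY; rewrite rows_ofM submxMl.
- move=> j x hx.
  have [_ [hC [_ hX]]] := hj j; move/eqmxP: hC => hC.
  have xC : (x *m B2 <= col_mx (Bmx s j) (rows_of ((g != 0) && r j) g))%MS.
    move: hx; rewrite mulmxA => /sub_addsmxP [[u1 u2] /= e].
    rewrite rows_ofM mulmxA in e.
    set w := u2 *m rows_of _ g in e.
    have : ((x *m B2 - w) *m Ymx s <= Vmx s j)%MS.
      by rewrite mulmxBl e addrK submxMl.
    move/hc => h; rewrite -(subrK w (x *m B2)); apply: addmx_sub.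
      exact: submx_trans h (sub_col_l _ _).
    exact: submx_trans (submxMl _ _) (sub_col_r _ _).
  rewrite -hC in xC; case/submxP: xC => y e.
  rewrite -(hsubmxK y) mul_row_col hX mulmxA in e.
  have := @cancel_col _ _ _ BD B2 (- lsubmx y) (x - rsubmx y *m X j) rfc.
  rewrite mulNmx mulmxBl e addrK addNr => /(_ erefl) /eqP.
  by rewrite subr_eq0 => /eqP ->; exact: submxMl.
- move=> j; have [_ [hC [_ hX]]] := hj j; move/eqmxP: hC => hC.
  rewrite mulmxA -hX.
  have sB : (Bj2 j <= col_mx (Bmx s j) (rows_of ((g != 0) && r j) g))%MS.
    by rewrite -hC sub_col_r.
  apply: submx_trans (submxMr _ sB) _.
  rewrite mul_col_mx -rows_ofM -addsmxE.
  by apply: addsmxS => //; exact: hd.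
- move=> x hx.
  have : (x *m B2 <= BD)%MS.
    move/eqmxP: eD => eD; rewrite eD; apply/sub_bigcapmxP => j _; rewrite genmxE.
    have [_ [hC [_ hX]]] := hj j; move/eqmxP: hC => hC.
    apply: submx_trans (submxMr _ (hx j)) _; rewrite -hX -hC.
    exact: sub_col_r.
  case/submxP => y e.
  by apply: (@cancel_col _ _ _ BD B2 (- y) x rfc); rewrite e mulNmx addNr.
Qed.


Lemma codim_seq Q (kb : 'I_n -> nat) (B : forall j, 'M[F]_(kb j, Q)) (s : seq 'I_n) :
  (Q <= \rank (\bigcap_(j <- s) <<B j>>)%MS + \sum_(j <- s) (Q - \rank (B j)))%N.
Proof.
elim: s => [|j s IH]; first by rewrite !big_nil mxrank1 addn0.
rewrite !big_cons.
have := mxrank_sum_cap <<B j>>%MS (\bigcap_(j <- s) <<B j>>)%MS.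
rewrite genmxE.
have := rank_leq_col (<<B j>> + \bigcap_(j <- s) <<B j>>)%MS.
have := rank_leq_col (B j).
set x := \rank (\bigcap_(j0 <- s) <<B j0>>)%MS in IH *; set y := \rank (_ + _)%MS; set z := \rank (_ :&: _)%MS; set w := \sum_(j0 <- s) _ in IH *. lia.
Qed.

Lemma Inv_count P s : (0 < n)%N -> Inv P s ->
  (qsz s <= \sum_(j < n) (N - \rank (Vmx s j)))%N.
Proof.
move=> hn [zY zV hc hd he].
have rfY : row_free (Ymx s).
  rewrite -kermx_eq0; apply/eqP/row_matrixP => i; rewrite row0.
  apply: he => j; apply: hc.
  have /sub_kermxP -> : (row i (kermx (Ymx s)) <= kermx (Ymx s))%MS := row_sub i _.
  exact: sub0mx.
have hj j : (qsz s - \rank (Bmx s j) <= N - \rank (Vmx s j))%N.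
  have h1 := mxrank_sum_cap (Vmx s j) (Ymx s).
  have h2 := rank_leq_col (Vmx s j + Ymx s)%MS.
  have h3 : (\rank (Vmx s j :&: Ymx s) <= \rank (Bmx s j))%N.
    have [D eD] : exists D, (Vmx s j :&: Ymx s)%MS = D *m Ymx s.
      by apply/submxP; exact: capmxSr.
    have sD : (D <= Bmx s j)%MS.
      apply/row_subP => i; apply: hc; rewrite -row_mul -eD.
      exact: submx_trans (row_sub _ _) (capmxSl _ _).
    rewrite eD; apply: leq_trans (mxrankM_maxl _ _) _; exact: mxrankS.
  move: rfY; rewrite /row_free => /eqP h4.
  lia.
have := codim_seq (Bmx s) (index_enum 'I_n).
have -> : (\bigcap_(j <- index_enum 'I_n) <<Bmx s j>>)%MS = 0.
  apply/row_matrixP => i; rewrite row0; apply: he => j.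
  apply: submx_trans (row_sub i _) _.
  have := (sub_bigcapmxP (submx_refl (\bigcap_(j <- index_enum 'I_n) <<Bmx s j>>)%MS)) j isT.
  by rewrite genmxE.
rewrite mxrank0 add0n => h; apply: leq_trans h _.
exact: leq_sum.
Qed.

Lemma sum_mono (a : nat -> nat) u v : (u <= v)%N -> (\sum_(i < u) a i <= \sum_(i < v) a i)%N.
Proof.
move=> uv; rewrite -!(big_mkord xpredT) (@big_cat_nat _ _ _ u 0 v) //=.
exact: leq_addr.
Qed.

End Helpers.
Unset Implicit Arguments.

Theorem theorem2 (F : finFieldType) (n : nat) (hn : (0 < n)%N) (hq : (n < #|F|)%N)
  (a : nat -> nat) (r : nat -> 'I_n -> bool) (t : nat)
  (sigma : nat -> state F n (\sum_(i < t.+1) a i)%N) :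
  sigma 0%N = init_state F n (\sum_(i < t.+1) a i)%N ->
  (forall u, (u < t)%N ->
     steps48 (arrive (\sum_(i < u) a i)%N (a u) (sigma u)) (r u) (sigma u.+1)) ->
  (qsz (arrive (\sum_(i < t) a i)%N (a t) (sigma t))
     <= \sum_(j < n) ((\sum_(i < t.+1) a i) - \rank (Vmx (sigma t) j)))%N.
Proof.
move=> H0 Hs.
have bnd u : (u <= t)%N -> (\sum_(i < u) a i + a u <= \sum_(i < t.+1) a i)%N.
  move=> ut; have e : (\sum_(i < u.+1) a i = \sum_(i < u) a i + a u)%N by rewrite big_ord_recr.
  by rewrite -e; apply: sum_mono.
have inv u : (u <= t)%N -> Inv (\sum_(i < u) a i)%N (sigma u).
  elim: u => [|u IH] hu; first by rewrite H0 big_ord0; exact: Inv_init.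
  rewrite (big_ord_recr u) /=.
  apply: Inv_steps (Hs u hu).
  exact: Inv_arrive hn (bnd u (ltnW hu)) (IH (ltnW hu)).
exact: Inv_count hn (Inv_arrive hn (bnd t (leqnn t)) (inv t (leqnn t))).
Qed.
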